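(* Let $K$ be a positive semiring and let $R$ and $S$ be $K$-relations over finite sets of attributes $X$ and $Y$, and put $Z=X\cap Y$. Then for every $r\in R'\ltimes S'$ we have $(R\Join S)[X](r)=c^*_{S,Z}\,R(r)$.
   Context: A commutative semiring $(K,+,\cdot,0,1)$ with $0\neq 1$ is positive if $a+b=0$ implies $a=b=0$, and $ab=0$ implies $a=0$ or $b=0$. Each attribute $A$ has a domain $\mathrm{Dom}(A)$. For a finite set of attributes $X$, $\mathrm{Tup}(X)$ is the set of maps assigning to each $A\in X$ an element of $\mathrm{Dom}(A)$; for $Y\subseteq X$, $t[Y]$ is the restriction of $t$ to $Y$; $XY$ denotes $X\cup Y$. A $K$-relation over $X$ is a map $R:\mathrm{Tup}(X)\to K$ with finite support $R'=\{t: R(t)\neq 0\}$. For $Y\subseteq X$, the marginal $R[Y]$ is the $K$-relation over $Y$ with $R[Y](u)=\sum_{r\in R',\, r[Y]=u} R(r)$. For a $K$-relation $T$ over $Y$, $Z\subseteq Y$ and $u\in\mathrm{Tup}(Z)$, set $c^*_{T,Z}=\prod_{v\in T[Z]'}T[Z](v)$ and $c_T(u)=\prod_{v\in T[Z]',\, v\neq u}T[Z](v)$ (empty products equal $1$). The join of $K$-relations $R$ over $X$ and $S$ over $Y$ is the $K$-relation over $XY$ defined by $(R\Join S)(t)=R(t[X])\,S(t[Y])\,c_S(t[X\cap Y])$, with $Z=X\cap Y$. For ordinary relations $P\subseteq\mathrm{Tup}(X)$, $Q\subseteq\mathrm{Tup}(Y)$, $P\Join Q$ is the set of $t\in\mathrm{Tup}(XY)$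 with $t[X]\in P$ and $t[Y]\in Q$, and the semijoin is $P\ltimes Q=\{t[X]: t\in P\Join Q\}$. *)

(* Defs.v *)
From HB Require Import structures.
From mathcomp Require Import all_boot all_order all_algebra.
From mathcomp Require Import finmap.
Set Implicit Arguments. Unset Strict Implicit. Unset Printing Implicit Defensive.
Import GRing.Theory.
Local Open Scope fset_scope.
Local Open Scope fmap_scope.
Local Open Scope ring_scope.

(* A commutative semiring with 0 <> 1 is a comNzSemiRingType; positivity: *)
Definition positive_semiring (K : comNzSemiRingType) : Prop :=
  (forall a b : K, a + b = 0 -> a = 0 /\ b = 0) /\
  (forall a b : K, a * b = 0 -> a = 0 \/ b = 0).

Section KRel.
Variables (Att V : choiceType) (Dom : Att -> {pred V}).

(* Tuples are finite maps from attributes to values; t is a tuple over X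
   (t in Tup(X)) iff its domain is exactly X and each value lies in the
   domain of its attribute. Restriction t[Y] is t.[& Y]. *)
Definition is_tuple (X : {fset Att}) (t : {fmap Att -> V}) : bool :=
  (domf t == X) && [forall k : domf t, t k \in Dom (val k)].

Variable K : comNzSemiRingType.

Record krel (X : {fset Att}) := KRel {
  krel_fun :> {fsfun {fmap Att -> V} -> K with 0};
  krel_supp : forall t, t \in finsupp krel_fun -> is_tuple X t }.

Definition supp (f : {fsfun {fmap Att -> V} -> K with 0}) := finsupp f.

Definition marg (T : {fsfun {fmap Att -> V} -> K with 0}) (Z : {fset Att})
  : {fsfun {fmap Att -> V} -> K with 0} :=
  [fsfun u in [fset r.[& Z] | r in finsupp T] =>
     \sum_(r <- finsupp T | r.[& Z] == u) T r | 0].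

Definition cstar (T : {fsfun {fmap Att -> V} -> K with 0}) (Z : {fset Att}) : K :=
  \prod_(v <- finsupp (marg T Z)) marg T Z v.

Definition cfac (T : {fsfun {fmap Att -> V} -> K with 0}) (Z : {fset Att})
  (u : {fmap Att -> V}) : K :=
  \prod_(v <- finsupp (marg T Z) | v != u) marg T Z v.

(* The join: (R |><| S)(t) = R(t[X]) S(t[Y]) c_S(t[X cap Y]) for t in Tup(XY).
   It is represented as a finitely supported function whose value is given by
   this formula on every gluing r + s = catf r s (r in R', s in S') and 0 elsewhere
   (on tuples of XY that are not such gluings the formula is 0 anyway). *)
Definition kjoin (X Y : {fset Att})
  (R S : {fsfun {fmap Att -> V} -> K with 0}) :
  {fsfun {fmap Att -> V} -> K with 0} :=
  [fsfun t in [fset (catf r s : {fmap Att -> V}) | r in finsupp R, s in finsupp S] =>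
     R t.[& X] * S t.[& Y] * cfac S (X `&` Y) t.[& X `&` Y] | 0].

Definition rjoin (X Y : {fset Att}) (P Q : {pred {fmap Att -> V}})
  (t : {fmap Att -> V}) : Prop :=
  is_tuple (X `|` Y) t /\ t.[& X] \in P /\ t.[& Y] \in Q.

Definition in_semijoin (X Y : {fset Att}) (P Q : {pred {fmap Att -> V}})
  (r : {fmap Att -> V}) : Prop :=
  exists t, rjoin X Y P Q t /\ r = t.[& X].

End KRel.

(* Main.v *)
Require Import Defs.
From HB Require Import structures.
From mathcomp Require Import all_boot all_order all_algebra.
From mathcomp Require Import finmap.
Local Open Scope fset_scope.
Local Open Scope fmap_scope.
Local Open Scope ring_scope.
Import GRing.Theory.

Lemma sum_neq0 (K : comNzSemiRingType) (HK : positive_semiring K) (I : eqType)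
  (s : seq I) (P : pred I) (F : I -> K) x :
  x \in s -> P x -> (forall y, y \in s -> P y -> F y != 0) ->
  \sum_(y <- s | P y) F y != 0.
Proof.
elim: s => // a s IH; rewrite inE => /orP[/eqP->|xs] Px H; rewrite big_cons.
  have Fx := H a (mem_head _ _) Px.
  by rewrite Px; apply/eqP => /(proj1 HK) [Fx0 _]; rewrite Fx0 eqxx in Fx.
case: ifP => Pa; last by apply: IH => // y ys; apply: H; rewrite inE ys orbT.
have : \sum_(y <- s | P y) F y != 0 by apply: IH => // y ys; apply: H; rewrite inE ys orbT.
by move=> Hs; apply/eqP => /(proj1 HK) [_ Hs0]; rewrite Hs0 eqxx in Hs.
Qed.

Lemma prod_neq0 (K : comNzSemiRingType) (HK : positive_semiring K) (I : eqType)
  (s : seq I) (P : pred I) (F : I -> K) :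
  (forall y, y \in s -> P y -> F y != 0) ->
  \prod_(y <- s | P y) F y != 0.
Proof.
elim: s => [|a s IH] H; first by rewrite big_nil oner_neq0.
rewrite big_cons; case: ifP => Pa; last by apply: IH => y ys; apply: H; rewrite inE ys orbT.
have Fa := H a (mem_head _ _) Pa.
have : \prod_(y <- s | P y) F y != 0 by apply: IH => y ys; apply: H; rewrite inE ys orbT.
move=> Hs; apply/eqP => /(proj2 HK) [E|E]; by rewrite E eqxx in Fa Hs.
Qed.

Lemma mul_neq0 (K : comNzSemiRingType) (HK : positive_semiring K) (a b : K) :
  a != 0 -> b != 0 -> a * b != 0.
Proof. by move=> a0 b0; apply/eqP => /(proj2 HK) [E|E]; rewrite E eqxx in a0 b0. Qed.
Theorem lemma5 (Att V : choiceType) (Dom : Att -> {pred V})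
  (K : comNzSemiRingType) (HK : positive_semiring K)
  (X Y : {fset Att}) (R : krel Dom K X) (S : krel Dom K Y)
  (r : {fmap Att -> V}) :
  in_semijoin Dom X Y (mem (supp R)) (mem (supp S)) r ->
  marg (kjoin X Y R S) X r = cstar S (X `&` Y) * R r.
Proof.
move=> [t0 [[Ht0 [HtR HtS]] ->]]; clear r.
set Z := X `&` Y.
have domR : forall t, t \in finsupp R -> domf t = X.
  by move=> t /(@krel_supp _ _ _ _ _ R) /andP [/eqP].
have domS : forall t, t \in finsupp S -> domf t = Y.
  by move=> t /(@krel_supp _ _ _ _ _ S) /andP [/eqP].
set r := t0.[& X]; set s0 := t0.[& Y].
have HrR : r \in finsupp R by [].
have Hs0S : s0 \in finsupp S by [].
set u := r.[& Z].
have Hu : s0.[& Z] = u.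
  rewrite /u /r /s0 !restrictf_comp /Z; congr (_.[& _]); apply/fsetP => k; rewrite !in_fsetI; by case: (k \in X); case: (k \in Y).
have glueX : forall s, s \in finsupp S -> s.[& Z] = u -> (catf r s).[& X] = r.
  move=> s sS su; apply/fmapP => k; rewrite fnd_restrict fnd_cat.
  have ks : (k \in domf s) = (k \in Y) by rewrite (domS _ sS).
  case: ifP => kX; last first.
    by rewrite not_fnd //; move: kX; rewrite -(domR _ HrR) => ->.
  case: ifP => kd //; have kY : k \in Y by rewrite -ks.
  have kZ : k \in Z by rewrite /Z in_fsetI kX kY.
  have -> : s.[? k] = s.[& Z].[? k] by rewrite fnd_restrict kZ.
  by rewrite su /u fnd_restrict kZ.
have glueY : forall r' s, s \in finsupp S -> (catf r' s).[& Y] = s.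
  move=> r' s sS; apply/fmapP => k; rewrite fnd_restrict fnd_cat.
  have ks : (k \in domf s) = (k \in Y) by rewrite (domS _ sS).
  rewrite ks; case: ifP => kY; rewrite ?kY //.
  by rewrite not_fnd //; move: kY; rewrite -ks => ->.

have XZ : X `&` Z = Z.
  by apply/fsetP => k; rewrite /Z !in_fsetI; case: (k \in X).
have YZ : Y `&` Z = Z.
  by apply/fsetP => k; rewrite /Z !in_fsetI; case: (k \in X); case: (k \in Y).
have margnz : forall v, v \in finsupp (marg S Z) -> marg S Z v != 0.
  by move=> v; rewrite mem_finsupp.
have cu_ne0 : cfac S Z u != 0.
  by apply: prod_neq0 => // v vs _; apply: margnz.
set J := kjoin X Y R S.
have Jval : forall s, s \in finsupp S -> s.[& Z] = u ->
    J (catf r s : {fmap Att -> V}) = R r * S s * cfac S Z u.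
  move=> s sS su; rewrite /J /kjoin fsfun_fun ifT.
    by rewrite glueX // glueY // -/Z -XZ -restrictf_comp glueX.
  by apply/imfset2P; exists r => //; exists s.
have Jsupp : forall s, s \in finsupp S -> s.[& Z] = u -> (catf r s : {fmap Att -> V}) \in finsupp J.
  move=> s sS su; rewrite mem_finsupp Jval //.
  have Rr : R r != 0 by move: HrR; rewrite mem_finsupp.
  have Ss : S s != 0 by move: sS; rewrite mem_finsupp.
  by apply: (@mul_neq0 _ HK) => //; apply: (@mul_neq0 _ HK).
have Jinv : forall t, t \in finsupp J -> t.[& X] = r ->
    [/\ t.[& Y] \in finsupp S, t.[& Y].[& Z] = u & t = catf r t.[& Y]].
  move=> t tJ tX.
  have : t \in [fset (catf r' s : {fmap Att -> V}) | r' in finsupp R, s in finsupp S].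
    apply: contraLR tJ => tn; rewrite mem_finsupp negbK.
    by rewrite /J /kjoin fsfun_fun (negPf tn).
  case/imfset2P => r' r'R [s' s'S tE]; subst t.
  have gY := glueY r' s' s'S. rewrite gY; split => //.
    by rewrite -gY restrictf_comp YZ -XZ -restrictf_comp tX.
  apply/fmapP => k; rewrite !fnd_cat; case: ifP => // kd.
  rewrite -tX fnd_restrict fnd_cat kd.
  case: ifP => // kX; rewrite not_fnd //; move: kX; rewrite -(domR _ r'R) => ->.
  done.

have rim : r \in [fset t.[& X] | t in finsupp J].
  by apply/imfsetP; exists (catf r s0 : {fmap Att -> V}); [apply: Jsupp | rewrite glueX].
rewrite /marg fsfun_fun rim -big_filter.
rewrite (@perm_big _ _ _ _ _ (map (fun s => catf r s : {fmap Att -> V})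
            [seq s <- finsupp S | s.[& Z] == u])); last first.
  apply: uniq_perm.
  - by rewrite filter_uniq // fset_uniq.
  - rewrite map_inj_in_uniq; first by rewrite filter_uniq // fset_uniq.
    move=> a b; rewrite !mem_filter => /andP [_ aS] /andP [_ bS] E.
    by rewrite -(glueY r a aS) E glueY.
  move=> t; rewrite mem_filter; apply/andP/mapP.
    move=> [/eqP tX tJ]; have [tS tZ tE] := Jinv t tJ tX.
    by exists t.[& Y] => //; rewrite mem_filter tZ eqxx.
  move=> [s]; rewrite mem_filter => /andP [/eqP su sS] ->.
  by split; [rewrite glueX | apply: Jsupp].
rewrite big_map.
rewrite (eq_big_seq (fun s => R r * cfac S Z u * S s)); last first.
  move=> s; rewrite mem_filter => /andP [/eqP su sS].
  by rewrite Jval // -mulrA (mulrC (S s)) mulrA.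
rewrite -big_distrr big_filter /=.
have uim : u \in [fset s.[& Z] | s in finsupp S].
  by apply/imfsetP; exists s0 => //; rewrite Hu.
have mu : marg S Z u = \sum_(s <- finsupp S | s.[& Z] == u) S s.
  by rewrite /marg fsfun_fun uim.
have uS : u \in finsupp (marg S Z).
  rewrite mem_finsupp mu; apply: sum_neq0 => //; first exact: Hs0S.
    by rewrite Hu.
  by move=> y yS _; move: yS; rewrite mem_finsupp.
rewrite /cstar (bigD1_seq u) //=; last exact: fset_uniq.
by rewrite -/(cfac S Z u) -mu [LHS]mulrC [RHS]mulrC !mulrA (mulrC (R r) (marg S Z u)).
Qed.
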